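(* Let $n\in\mathbb{N}$ and let $M\models \mathrm{I}\Delta_0$. Suppose $M$ admits a proper $\Sigma_{n+2}$-elementary end extension $K$ with $K\models \mathrm{B}\Sigma_{n+1}$. Then for every $a\in M$ and every $\Pi_{n+1}$-formula $\phi(x,y)$ with parameters from $M$, \[M\models \forall x\,\exists y<a\,\phi(x,y)\;\rightarrow\;\exists y<a\,\forall b\,\exists x>b\,\phi(x,y).\]
   Context: All theories contain $\mathrm{PA}^-$ (the theory of non-negative parts of discretely ordered rings). $\mathrm{I}\Delta_0$ is bounded induction; $\mathrm{B}\Sigma_{k}$ is the $\Sigma_k$-collection scheme $\forall x<a\,\exists y\,\phi(x,y)\to\exists b\,\forall x<a\,\exists y<b\,\phi(x,y)$ for $\Sigma_k$ formulas $\phi$ (with parameters), taken together with $\mathrm{I}\Delta_0$. An extension $M\subseteq K$ of models of first-order arithmetic is $\Sigma_k$-elementary if every $\Sigma_k$ formula with parameters from $M$ has the same truth value in $M$ and $K$; it is an end extension if every element of $K\setminus M$ is greater than every element of $M$; it is proper if $K\neq M$. *)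

(* Defs.v *)
Set Implicit Arguments.

Inductive term : Type :=
| tVar : nat -> term
| tZero : term
| tOne : term
| tPlus : term -> term -> term
| tMult : term -> term -> term.

(* BAll t p  is  (forall x < t, p)  and  BEx t p  is  (exists x < t, p);
   the bound variable is de Bruijn index 0 in p, and t is evaluated in the
   outer environment (so x does not occur in t). *)
Inductive formula : Type :=
| fEq : term -> term -> formula
| fLt : term -> term -> formula
| fBot : formula
| fNot : formula -> formula
| fAnd : formula -> formula -> formula
| fOr : formula -> formula -> formula
| fImp : formula -> formula -> formula
| fBAll : term -> formula -> formula
| fBEx : term -> formula -> formula
| fAll : formula -> formula
| fEx : formula -> formula.

Record structure : Type := Structure {
  carrier :> Type;
  zero : carrier;
  one : carrier;
  add : carrier -> carrier -> carrier;
  mul : carrier -> carrier -> carrier;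
  lt : carrier -> carrier -> Prop
}.

Definition scons {A : Type} (x : A) (e : nat -> A) : nat -> A :=
  fun i => match i with 0 => x | S j => e j end.

Fixpoint eval (M : structure) (e : nat -> M) (t : term) : M :=
  match t with
  | tVar i => e i
  | tZero => zero M
  | tOne => one M
  | tPlus u v => add M (eval M e u) (eval M e v)
  | tMult u v => mul M (eval M e u) (eval M e v)
  end.

Fixpoint sat (M : structure) (e : nat -> M) (p : formula) : Prop :=
  match p with
  | fEq u v => eval M e u = eval M e v
  | fLt u v => lt M (eval M e u) (eval M e v)
  | fBot => False
  | fNot q => ~ sat M e q
  | fAnd q r => sat M e q /\ sat M e r
  | fOr q r => sat M e q \/ sat M e r
  | fImp q r => sat M e q -> sat M e r
  | fBAll t q => forall x : M, lt M x (eval M e t) -> sat M (scons x e) q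
  | fBEx t q => exists x : M, lt M x (eval M e t) /\ sat M (scons x e) q
  | fAll q => forall x : M, sat M (scons x e) q
  | fEx q => exists x : M, sat M (scons x e) q
  end.

Fixpoint Delta0 (p : formula) : Prop :=
  match p with
  | fEq _ _ | fLt _ _ | fBot => True
  | fNot q => Delta0 q
  | fAnd q r | fOr q r | fImp q r => Delta0 q /\ Delta0 r
  | fBAll _ q | fBEx _ q => Delta0 q
  | fAll _ | fEx _ => False
  end.

Inductive IsSigma : nat -> formula -> Prop :=
| Sigma0 : forall p, Delta0 p -> IsSigma 0 p
| SigmaS_Pi : forall k p, IsPi k p -> IsSigma (S k) p
| SigmaS_Ex : forall k p, IsSigma (S k) p -> IsSigma (S k) (fEx p)
with IsPi : nat -> formula -> Prop :=
| Pi0 : forall p, Delta0 p -> IsPi 0 p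
| PiS_Sigma : forall k p, IsSigma k p -> IsPi (S k) p
| PiS_All : forall k p, IsPi (S k) p -> IsPi (S k) (fAll p).

Definition PAminus (M : structure) : Prop :=
  let z := zero M in let o := one M in
  let ad := add M in let mu := mul M in let l := lt M in
  (forall x y, ad x y = ad y x) /\
  (forall x y w, ad (ad x y) w = ad x (ad y w)) /\
  (forall x y, mu x y = mu y x) /\
  (forall x y w, mu (mu x y) w = mu x (mu y w)) /\
  (forall x y w, mu x (ad y w) = ad (mu x y) (mu x w)) /\
  (forall x, ad x z = x) /\
  (forall x, mu x z = z) /\
  (forall x, mu x o = x) /\
  (forall x, ~ l x x) /\
  (forall x y w, l x y -> l y w -> l x w) /\
  (forall x y, l x y \/ x = y \/ l y x) /\
  (forall x y w, l x y -> l (ad x w) (ad y w)) /\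
  (forall x y w, l z w -> l x y -> l (mu x w) (mu y w)) /\
  (forall x y, l x y -> exists w, ad x w = y) /\
  l z o /\
  (forall x, l z x -> o = x \/ l o x) /\
  (forall x, z = x \/ l z x).

Definition IDelta0 (M : structure) : Prop :=
  PAminus M /\
  forall (p : formula) (e : nat -> M), Delta0 p ->
    sat M (scons (zero M) e) p ->
    (forall x : M, sat M (scons x e) p -> sat M (scons (add M x (one M)) e) p) ->
    forall x : M, sat M (scons x e) p.

(* Sigma_k collection (with parameters), together with IDelta0.
   phi(x,y): y is de Bruijn index 0, x is index 1. *)
Definition BSigma (k : nat) (M : structure) : Prop :=
  IDelta0 M /\
  forall (p : formula) (e : nat -> M) (a : M), IsSigma k p ->
    (forall x : M, lt M x a -> exists y : M, sat M (scons y (scons x e)) p) ->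
    exists b : M, forall x : M, lt M x a ->
      exists y : M, lt M y b /\ sat M (scons y (scons x e)) p.

Definition is_embedding {M K : structure} (f : M -> K) : Prop :=
  (forall x y, f x = f y -> x = y) /\
  f (zero M) = zero K /\ f (one M) = one K /\
  (forall x y, f (add M x y) = add K (f x) (f y)) /\
  (forall x y, f (mul M x y) = mul K (f x) (f y)) /\
  (forall x y, lt M x y <-> lt K (f x) (f y)).

Definition in_image {M K : structure} (f : M -> K) (y : K) : Prop :=
  exists x : M, f x = y.

Definition end_extension {M K : structure} (f : M -> K) : Prop :=
  forall y : K, ~ in_image f y -> forall x : M, lt K (f x) y.

Definition proper_extension {M K : structure} (f : M -> K) : Prop :=
  exists y : K, ~ in_image f y.

Definition sigma_elementary (k : nat) {M K : structure} (f : M -> K) : Prop :=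
  forall (p : formula) (e : nat -> M), IsSigma k p ->
    (sat M e p <-> sat K (fun i => f (e i)) p).

(* Main.v *)
Require Import Defs.
From Stdlib Require Import Classical FunctionalExtensionality Lia Arith PeanoNat.
Import Defs.
Scheme IsSigma_mut := Induction for IsSigma Sort Prop
with IsPi_mut := Induction for IsPi Sort Prop.

Lemma mono_both :
  (forall k p, IsSigma k p -> IsSigma (S k) p) /\ (forall k p, IsPi k p -> IsPi (S k) p).
Proof.
  split.
  - apply (IsSigma_mut (fun k p _ => IsSigma (S k) p) (fun k p _ => IsPi (S k) p));
      intros; try (constructor; assumption).
    + apply SigmaS_Pi. apply Pi0. assumption.
    + apply PiS_Sigma. apply Sigma0. assumption.
  - apply (IsPi_mut (fun k p _ => IsSigma (S k) p) (fun k p _ => IsPi (S k) p));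
      intros; try (constructor; assumption).
    + apply SigmaS_Pi. apply Pi0. assumption.
    + apply PiS_Sigma. apply Sigma0. assumption.
Qed.

Lemma mono_sigma : forall j k p, IsSigma k p -> k <= j -> IsSigma j p.
Proof.
  induction j; intros k p H Hle.
  - assert (k = 0) by lia. subst; auto.
  - destruct (Nat.eq_dec k (S j)). subst; auto.
    apply (proj1 mono_both). apply IHj with k; auto. lia.
Qed.

Fixpoint tsubst (s : nat -> term) (t : term) : term :=
  match t with
  | tVar i => s i
  | tZero => tZero
  | tOne => tOne
  | tPlus u v => tPlus (tsubst s u) (tsubst s v)
  | tMult u v => tMult (tsubst s u) (tsubst s v)
  end.

Definition lift (t : term) : term := tsubst (fun k => tVar (S k)) t.

Definition up (s : nat -> term) : nat -> term :=
  fun i => match i with 0 => tVar 0 | S j => lift (s j) end.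

Fixpoint fsubst (s : nat -> term) (p : formula) : formula :=
  match p with
  | fEq u v => fEq (tsubst s u) (tsubst s v)
  | fLt u v => fLt (tsubst s u) (tsubst s v)
  | fBot => fBot
  | fNot q => fNot (fsubst s q)
  | fAnd q r => fAnd (fsubst s q) (fsubst s r)
  | fOr q r => fOr (fsubst s q) (fsubst s r)
  | fImp q r => fImp (fsubst s q) (fsubst s r)
  | fBAll t q => fBAll (tsubst s t) (fsubst (up s) q)
  | fBEx t q => fBEx (tsubst s t) (fsubst (up s) q)
  | fAll q => fAll (fsubst (up s) q)
  | fEx q => fEx (fsubst (up s) q)
  end.

Lemma eval_tsubst : forall (M : structure) g s t,
  eval M g (tsubst s t) = eval M (fun i => eval M g (s i)) t.
Proof. induction t; simpl; auto; rewrite IHt1, IHt2; auto. Qed.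

Lemma eval_lift : forall (M : structure) g x t, eval M (scons x g) (lift t) = eval M g t.
Proof. intros. unfold lift. rewrite eval_tsubst. reflexivity. Qed.

Lemma up_eval : forall (M : structure) (g : nat -> M) x s,
  (fun i => eval M (scons x g) (up s i)) = scons x (fun i => eval M g (s i)).
Proof.
  intros. apply functional_extensionality. intros [|i]; simpl; auto.
  apply eval_lift.
Qed.

Lemma sat_fsubst : forall (M : structure) p s g,
  sat M g (fsubst s p) <-> sat M (fun i => eval M g (s i)) p.
Proof.
  intros M p. induction p; intros s g; simpl sat; simpl fsubst; simpl sat;
    try rewrite !eval_tsubst; try tauto.
  - rewrite IHp. tauto.
  - rewrite IHp1, IHp2. tauto.
  - rewrite IHp1, IHp2. tauto.
  - rewrite IHp1, IHp2. tauto.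
  - split; intros H x Hx; specialize (H x Hx); [rewrite IHp, up_eval in H | rewrite IHp, up_eval]; auto.
  - split; intros [x [Hx H]]; exists x; split; auto; [rewrite IHp, up_eval in H | rewrite IHp, up_eval]; auto.
  - split; intros H x; specialize (H x); [rewrite IHp, up_eval in H | rewrite IHp, up_eval]; auto.
  - split; intros [x H]; exists x; [rewrite IHp, up_eval in H | rewrite IHp, up_eval]; auto.
Qed.

Definition fren (r : nat -> nat) (p : formula) : formula := fsubst (fun i => tVar (r i)) p.

Lemma sat_fren : forall (M : structure) p r g,
  sat M g (fren r p) <-> sat M (fun i => g (r i)) p.
Proof. intros. unfold fren. rewrite sat_fsubst. reflexivity. Qed.

Lemma delta0_fsubst : forall p s, Delta0 p -> Delta0 (fsubst s p).
Proof. induction p; simpl; intros; intuition. Qed.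

Lemma classes_fsubst :
  (forall k p, IsSigma k p -> forall s, IsSigma k (fsubst s p)) /\
  (forall k p, IsPi k p -> forall s, IsPi k (fsubst s p)).
Proof.
  split.
  - apply (IsSigma_mut (fun k p _ => forall s, IsSigma k (fsubst s p)) (fun k p _ => forall s, IsPi k (fsubst s p)));
      intros; simpl; first [ now (apply SigmaS_Ex; auto) | now (apply PiS_All; auto) | now (apply SigmaS_Pi; auto) | now (apply PiS_Sigma; auto) | now (apply Sigma0; auto using delta0_fsubst) | now (apply Pi0; auto using delta0_fsubst)].
  - apply (IsPi_mut (fun k p _ => forall s, IsSigma k (fsubst s p)) (fun k p _ => forall s, IsPi k (fsubst s p)));
      intros; simpl; first [ now (apply SigmaS_Ex; auto) | now (apply PiS_All; auto) | now (apply SigmaS_Pi; auto) | now (apply PiS_Sigma; auto) | now (apply Sigma0; auto using delta0_fsubst) | now (apply Pi0; auto using delta0_fsubst)].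
Qed.

Fixpoint neg (p : formula) : formula :=
  match p with
  | fEx q => fAll (neg q)
  | fAll q => fEx (neg q)
  | _ => fNot p
  end.

Lemma sat_neg : forall (M : structure) p g, sat M g (neg p) <-> ~ sat M g p.
Proof.
  intros M p. induction p; intros g; simpl; try tauto.
  - split. intros [x Hx] H. apply (IHp (scons x g)); auto.
    intros H. apply NNPP. intro H2. apply H. intro x. apply NNPP. intro H3.
    apply H2. exists x. apply IHp. auto.
  - split. intros H [x Hx]. apply (IHp (scons x g)); auto.
    intros H x. apply IHp. intro. apply H. exists x; auto.
Qed.

Lemma delta0_neg : forall p, Delta0 p -> Delta0 (neg p).
Proof. destruct p; simpl; auto. Qed.

Lemma classes_neg :
  (forall k p, IsSigma k p -> IsPi k (neg p)) /\
  (forall k p, IsPi k p -> IsSigma k (neg p)).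
Proof.
  split.
  - apply (IsSigma_mut (fun k p _ => IsPi k (neg p)) (fun k p _ => IsSigma k (neg p)));
      intros; simpl; first [ now (apply SigmaS_Ex; auto) | now (apply PiS_All; auto) | now (apply SigmaS_Pi; auto) | now (apply PiS_Sigma; auto) | now (apply Sigma0; auto using delta0_neg) | now (apply Pi0; auto using delta0_neg)].
  - apply (IsPi_mut (fun k p _ => IsPi k (neg p)) (fun k p _ => IsSigma k (neg p)));
      intros; simpl; first [ now (apply SigmaS_Ex; auto) | now (apply PiS_All; auto) | now (apply SigmaS_Pi; auto) | now (apply PiS_Sigma; auto) | now (apply Sigma0; auto using delta0_neg) | now (apply Pi0; auto using delta0_neg)].
Qed.

Inductive SigN : nat -> nat -> formula -> Prop :=
| SigN0 : forall p, Delta0 p -> SigN 0 0 p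
| SigNP : forall k p, IsPi k p -> SigN (S k) 0 p
| SigNE : forall k m p, SigN (S k) m p -> SigN (S k) (S m) (fEx p).

Inductive PiN : nat -> nat -> formula -> Prop :=
| PiN0 : forall p, Delta0 p -> PiN 0 0 p
| PiNS : forall k p, IsSigma k p -> PiN (S k) 0 p
| PiNA : forall k m p, PiN (S k) m p -> PiN (S k) (S m) (fAll p).

Lemma sig_to_N : forall k p, IsSigma k p -> exists m, SigN k m p.
Proof.
  intros k p H. induction H.
  - exists 0. constructor; auto.
  - exists 0. constructor; auto.
  - destruct IHIsSigma as [m Hm]. exists (S m). constructor; auto.
Qed.

Lemma pi_to_N : forall k p, IsPi k p -> exists m, PiN k m p.
Proof.
  intros k p H. induction H.
  - exists 0. constructor; auto.
  - exists 0. constructor; auto.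
  - destruct IHIsPi as [m Hm]. exists (S m). constructor; auto.
Qed.

Lemma N_to_sig : forall k m p, SigN k m p -> IsSigma k p.
Proof. intros k m p H; induction H. apply Sigma0; auto. apply SigmaS_Pi; auto. apply SigmaS_Ex; auto. Qed.

Lemma N_to_pi : forall k m p, PiN k m p -> IsPi k p.
Proof. intros k m p H; induction H. apply Pi0; auto. apply PiS_Sigma; auto. apply PiS_All; auto. Qed.

Section NF.
Variable K : structure.

Definition coll k := forall (p : formula) (e : nat -> K) (a : K), IsSigma k p ->
    (forall x : K, lt K x a -> exists y : K, sat K (scons y (scons x e)) p) ->
    exists b : K, forall x : K, lt K x a ->
      exists y : K, lt K y b /\ sat K (scons y (scons x e)) p.

Definition AStmt k := forall m q, SigN k m q -> forall t (xi : nat -> nat), exists q', SigN k m q' /\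
  forall g, sat K g q' <-> exists y, lt K y (eval K g t) /\ sat K (fun i => scons y g (xi i)) q.
Definition BStmt k := forall m q, PiN k m q -> forall t (xi : nat -> nat), exists q', PiN k m q' /\
  forall g, sat K g q' <-> forall y, lt K y (eval K g t) -> sat K (fun i => scons y g (xi i)) q.
Definition CStmt k := forall m q, SigN k m q -> forall t (xi : nat -> nat), exists q', IsSigma k q' /\
  forall g, sat K g q' <-> forall y, lt K y (eval K g t) -> sat K (fun i => scons y g (xi i)) q.
Definition DStmt k := forall m q, PiN k m q -> forall t (xi : nat -> nat), exists q', IsPi k q' /\
  forall g, sat K g q' <-> exists y, lt K y (eval K g t) /\ sat K (fun i => scons y g (xi i)) q.

Definition swp (xi : nat -> nat) : nat -> nat :=
  fun i => match i with 0 => 1 | S j => match xi j with 0 => 0 | S l => S (S l) end end.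
Definition upB (xi : nat -> nat) : nat -> nat :=
  fun i => match i with 0 => 0 | S j => S (match xi j with 0 => 0 | S l => S (S l) end) end.
Definition upr (xi : nat -> nat) : nat -> nat :=
  fun i => match i with 0 => 0 | S j => S (xi j) end.

Lemma env_swp : forall (g : nat -> K) xi y z,
  (fun i => scons y (scons z g) (swp xi i)) = scons z (fun i => scons y g (xi i)).
Proof. intros. apply functional_extensionality. intros [|i]; simpl; auto. destruct (xi i); auto. Qed.

Lemma env_upB : forall (g : nat -> K) xi y z w,
  (fun i => scons z (scons y (scons w g)) (upB xi i)) = scons z (fun i => scons y g (xi i)).
Proof. intros. apply functional_extensionality. intros [|i]; simpl; auto. destruct (xi i); auto. Qed.

Lemma env_upr : forall (g : nat -> K) xi y x,
  (fun i => scons y (scons x g) (upr xi i)) = scons y (fun i => scons x g (xi i)).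
Proof. intros. apply functional_extensionality. intros [|i]; simpl; auto. Qed.

Lemma A_0 : AStmt 0.
Proof.
  intros m q H t xi. inversion H; subst.
  exists (fBEx t (fren xi q)). split.
  - constructor. simpl. apply delta0_fsubst; auto.
  - intros g. simpl. setoid_rewrite sat_fren. reflexivity.
Qed.

Lemma B_0 : BStmt 0.
Proof.
  intros m q H t xi. inversion H; subst.
  exists (fBAll t (fren xi q)). split.
  - constructor. simpl. apply delta0_fsubst; auto.
  - intros g. simpl. setoid_rewrite sat_fren. reflexivity.
Qed.

Lemma C_0 : CStmt 0.
Proof.
  intros m q H t xi. inversion H; subst.
  exists (fBAll t (fren xi q)). split.
  - constructor. simpl. apply delta0_fsubst; auto.
  - intros g. simpl. setoid_rewrite sat_fren. reflexivity.
Qed.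

Lemma D_0 : DStmt 0.
Proof.
  intros m q H t xi. inversion H; subst.
  exists (fBEx t (fren xi q)). split.
  - constructor. simpl. apply delta0_fsubst; auto.
  - intros g. simpl. setoid_rewrite sat_fren. reflexivity.
Qed.

Lemma A_S : forall k, DStmt k -> AStmt (S k).
Proof.
  intros k HD m. induction m; intros q H t xi; inversion H; subst.
  - destruct (pi_to_N _ _ H1) as [m0 Hm0].
    destruct (HD _ _ Hm0 t xi) as [q' [Hq' Hs]].
    exists q'. split. apply SigNP; exact Hq'. auto.
  - destruct (IHm p H2 (lift t) (swp xi)) as [p' [Hp' Hs]].
    exists (fEx p'). split. constructor; auto.
    intros g. simpl. split.
    + intros [z Hz]. apply Hs in Hz. destruct Hz as [y [Hy Hz]].
      rewrite eval_lift in Hy. rewrite env_swp in Hz. exists y; split; auto. exists z; auto.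
    + intros [y [Hy [z Hz]]]. exists z. apply Hs. exists y. rewrite eval_lift, env_swp. auto.
Qed.

Lemma B_S : forall k, CStmt k -> BStmt (S k).
Proof.
  intros k HC m. induction m; intros q H t xi; inversion H; subst.
  - destruct (sig_to_N _ _ H1) as [m0 Hm0].
    destruct (HC _ _ Hm0 t xi) as [q' [Hq' Hs]].
    exists q'. split. apply PiNS; auto. auto.
  - destruct (IHm p H2 (lift t) (swp xi)) as [p' [Hp' Hs]].
    exists (fAll p'). split. constructor; auto.
    intros g. simpl. split.
    + intros Hz y Hy z. specialize (Hz z). rewrite Hs in Hz.
      specialize (Hz y). rewrite eval_lift, env_swp in Hz. auto.
    + intros Hz z. apply Hs. intros y Hy. rewrite eval_lift in Hy. rewrite env_swp. auto.
Qed.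

Lemma C_S : forall k, coll (S k) -> AStmt (S k) -> BStmt k -> CStmt (S k).
Proof.
  intros k Hcoll HA HB m. induction m; intros q H t xi; inversion H; subst.
  - destruct (pi_to_N _ _ H1) as [m0 Hm0].
    destruct (HB _ _ Hm0 t xi) as [q' [Hq' Hs]].
    exists q'. split. apply SigmaS_Pi; eapply N_to_pi; exact Hq'. auto.
  - destruct (HA _ _ H2 (tVar 1) (upB xi)) as [p1 [Hp1 Hs1]].
    destruct (IHm p1 Hp1 (lift t) (fun i => i)) as [p2 [Hp2 Hs2]].
    exists (fEx p2). split. apply SigmaS_Ex; auto.
    intros g. simpl. split.
    + intros [w Hw] y Hy. rewrite Hs2 in Hw. specialize (Hw y).
      rewrite eval_lift in Hw. specialize (Hw Hy). apply Hs1 in Hw.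
      destruct Hw as [z [_ Hz]]. rewrite env_upB in Hz. exists z; auto.
    + intros Hall.
      destruct (Hcoll (fren (upr xi) p) g (eval K g t)) as [b Hb].
      * apply (proj1 classes_fsubst). eapply N_to_sig; eauto.
      * intros x Hx. destruct (Hall x Hx) as [z Hz]. exists z.
        rewrite sat_fren, env_upr. auto.
      * exists b. apply Hs2. intros y Hy. rewrite eval_lift in Hy.
        apply Hs1. destruct (Hb y Hy) as [z [Hz1 Hz2]]. exists z. simpl. split; auto.
        rewrite sat_fren, env_upr in Hz2. rewrite env_upB. auto.
Qed.

Lemma D_S : forall k, coll (S k) -> BStmt (S k) -> AStmt k -> DStmt (S k).
Proof.
  intros k Hcoll HB HA m. induction m; intros q H t xi; inversion H; subst.
  - destruct (sig_to_N _ _ H1) as [m0 Hm0].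
    destruct (HA _ _ Hm0 t xi) as [q' [Hq' Hs]].
    exists q'. split. apply PiS_Sigma; eapply N_to_sig; exact Hq'. auto.
  - destruct (HB _ _ H2 (tVar 1) (upB xi)) as [p1 [Hp1 Hs1]].
    destruct (IHm p1 Hp1 (lift t) (fun i => i)) as [p2 [Hp2 Hs2]].
    exists (fAll p2). split. apply PiS_All; auto.
    intros g. simpl. split.
    + intros Hw. apply NNPP. intro Hno.
      destruct (Hcoll (neg (fren (upr xi) p)) g (eval K g t)) as [b Hb].
      * apply (proj2 classes_neg). apply (proj2 classes_fsubst). eapply N_to_pi; eauto.
      * intros x Hx. apply NNPP. intro Hn2. apply Hno. exists x. split; auto.
        intro z. apply NNPP. intro Hn3. apply Hn2. exists z.
        rewrite sat_neg, sat_fren, env_upr. auto.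
      * specialize (Hw b). rewrite Hs2 in Hw. destruct Hw as [y [Hy Hw]].
        rewrite eval_lift in Hy. pose proof (proj1 (Hs1 (scons y (scons b g))) Hw) as Hw2. clear Hw. rename Hw2 into Hw.
        destruct (Hb y Hy) as [z [Hz1 Hz2]].
        rewrite sat_neg, sat_fren, env_upr in Hz2. apply Hz2.
        specialize (Hw z Hz1). rewrite env_upB in Hw. auto.
    + intros [y [Hy Hz]] w. apply Hs2. exists y. rewrite eval_lift. split; auto.
      apply Hs1. intros z _. simpl. rewrite env_upB. apply Hz.
Qed.

Lemma coll_down : forall k, coll (S k) -> coll k.
Proof. intros k H p e a Hp. apply H. apply (proj1 mono_both). auto. Qed.

Lemma all_levels : forall k, coll k -> AStmt k /\ BStmt k /\ CStmt k /\ DStmt k.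
Proof.
  induction k; intros Hc.
  - split; [apply A_0 | split; [apply B_0 | split; [apply C_0 | apply D_0]]].
  - destruct (IHk (coll_down _ Hc)) as [HA [HB [HC HD]]].
    assert (HA' := A_S _ HD). assert (HB' := B_S _ HC).
    split; auto. split; auto. split. apply C_S; auto. apply D_S; auto.
Qed.
End NF.

Lemma pa_lt_succ_add : forall (M : structure), PAminus M ->
  forall b d, lt M b (add M (add M b (one M)) d).
Proof.
  intros M HPA. unfold PAminus in HPA. cbv zeta in HPA.
  destruct HPA as [Hc1 [Ha2 [Hc3 [Ha4 [Hd5 [H0 [Hm0 [Hm1 [Hirr [Htr [Htri [Hladd [Hlmul [Hsub [H01 [Hpos Hnn]]]]]]]]]]]]]]]].
  intros b d.
  assert (Hb1 : lt M b (add M b (one M))).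
  { pose proof (Hladd _ _ b H01) as X. rewrite (Hc1 (zero M) b), H0, (Hc1 (one M) b) in X. exact X. }
  destruct (Hnn d) as [Hd | Hd].
  - subst d. rewrite H0. exact Hb1.
  - apply Htr with (add M b (one M)); auto.
    pose proof (Hladd _ _ (add M b (one M)) Hd) as X.
    rewrite (Hc1 (zero M)), H0, (Hc1 d) in X. exact X.
Qed.

Theorem proposition1p3 (n : nat) (M K : structure) (f : M -> K) :
  IDelta0 M ->
  is_embedding f -> end_extension f -> proper_extension f ->
  sigma_elementary (n + 2) f ->
  BSigma (n + 1) K ->
  forall (phi : formula) (e : nat -> M) (a : M),
    IsPi (n + 1) phi ->
    ((forall x : M, exists y : M, lt M y a /\ sat M (scons y (scons x e)) phi) ->
     exists y : M, lt M y a /\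
       forall b : M, exists x : M, lt M b x /\ sat M (scons y (scons x e)) phi).
Proof.
  intros HM Hemb Hend Hprop Hel HB phi e a Hphi H.
  assert (Hel' : forall p (e0 : nat -> M), IsSigma (S (n+1)) p ->
     (sat M e0 p <-> sat K (fun i => f (e0 i)) p)).
  { intros p e0 Hp. apply Hel. replace (n+2) with (S (n+1)) by lia. exact Hp. }
  assert (HtransPi : forall p (e0 : nat -> M), IsPi (S (n+1)) p ->
     sat M e0 p -> sat K (fun i => f (e0 i)) p).
  { intros p e0 Hp Hs. apply NNPP. intro Hn. rewrite <- sat_neg in Hn.
    apply (Hel' _ e0) in Hn. rewrite sat_neg in Hn. auto.
    apply (proj2 classes_neg). auto. }
  destruct HB as [HK HcollK].
  destruct HM as [HPAM _].
  destruct HK as [HPAK _].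
  assert (HPAK' := HPAK).
  unfold PAminus in HPAK'. cbv zeta in HPAK'.
  destruct HPAK' as [_ [_ [_ [_ [_ [_ [_ [_ [Hirr [Htr [_ [_ [_ [Hsub _]]]]]]]]]]]]]].
  destruct Hemb as [Hinj [Hf0 [Hf1 [Hfadd [Hfmul Hflt]]]]].
  set (fe := fun i => f (e i)).
  apply NNPP; intro Hno.
  destruct Hprop as [c Hc].
  assert (Hcbig : forall x, lt K (f x) c) by (apply Hend; auto).
  assert (Claim1 : forall y, lt M y a -> ~ sat K (scons (f y) (scons c fe)) phi).
  { intros y Hy Hsat.
    assert (Hbx : exists b, forall x, lt M b x -> ~ sat M (scons y (scons x e)) phi).
    { apply NNPP; intro Hn2; apply Hno; exists y; split; auto; intro b.
      apply NNPP; intro Hn3; apply Hn2; exists b; intros x Hbx Hs; apply Hn3; exists x; auto. }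
    destruct Hbx as [b Hb].
    set (sg := fun i => match i with 0 => tVar 1 | 1 => tPlus (tPlus (tVar 2) tOne) (tVar 0)
                                 | S (S i) => tVar (S (S (S i))) end).
    assert (HPhi : IsPi (S (n+1)) (fAll (neg (fsubst sg phi)))).
    { apply PiS_All. apply PiS_Sigma. apply (proj2 classes_neg). apply (proj2 classes_fsubst). auto. }
    assert (HsM : sat M (scons y (scons b e)) (fAll (neg (fsubst sg phi)))).
    { simpl. intro d. rewrite sat_neg, sat_fsubst.
      replace (fun i => eval M (scons d (scons y (scons b e))) (sg i))
        with (scons y (scons (add M (add M b (one M)) d) e)).
      apply Hb. apply pa_lt_succ_add; auto.
      apply functional_extensionality. intros [|[|i]]; reflexivity. }
    apply HtransPi in HsM; auto.
    destruct (Hsub _ _ (Hcbig (add M b (one M)))) as [d Hd].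
    simpl in HsM. specialize (HsM d). rewrite sat_neg, sat_fsubst in HsM. apply HsM.
    replace (fun i => eval K (scons d (fun i0 => f (scons y (scons b e) i0))) (sg i))
      with (scons (f y) (scons c fe)). exact Hsat.
    apply functional_extensionality. intros [|[|i]]; try reflexivity.
    simpl. rewrite <- Hd, Hfadd, Hf1. reflexivity. }
  assert (Claim2 : forall yK, lt K yK (f a) -> sat K (scons yK (scons c fe)) (neg phi)).
  { intros yK HyK. destruct (classic (in_image f yK)) as [[y Hy]|Hn].
    - subst yK. rewrite sat_neg. apply Claim1. apply Hflt. auto.
    - exfalso. apply (Hirr (f a)). apply Htr with yK; [apply Hend; auto | auto]. }
  destruct (all_levels K (n+1) HcollK) as [_ [_ [HC _]]].
  destruct (sig_to_N _ _ (proj2 classes_neg _ _ Hphi)) as [m Hm].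
  set (xi := fun i => match i with 0 => 0 | 1 => 1 | S (S i) => S (S (S i)) end).
  destruct (HC _ _ Hm (tVar 1) xi) as [q' [Hq' Hs]].
  assert (Hq2 : IsSigma (S (n+1)) q') by (apply (proj1 mono_both); auto).
  assert (HK1 : sat K (fun i => f (scons a e i)) (fEx q')).
  { exists c. apply Hs. simpl. intros yK HyK.
    replace (fun i => scons yK (scons c (fun i0 => f (scons a e i0))) (xi i))
      with (scons yK (scons c fe)). apply Claim2; auto.
    apply functional_extensionality. intros [|[|i]]; reflexivity. }
  rewrite <- Hel' in HK1 by (apply SigmaS_Ex; auto).
  destruct HK1 as [x Hx].
  rewrite Hel' in Hx by auto.
  destruct (H x) as [y [Hy Hphy]].
  rewrite Hel' in Hphy by (apply SigmaS_Pi; auto).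
  pose proof (proj1 (Hs _) Hx) as Hx2. clear Hx. rename Hx2 into Hx. specialize (Hx (f y)). simpl in Hx.
  assert (Hfy : lt K (f y) (f a)) by (apply Hflt; auto).
  specialize (Hx Hfy). rewrite sat_neg in Hx. apply Hx.
  replace (fun i => scons (f y) (fun i0 => f (scons x (scons a e) i0)) (xi i))
    with (fun i => f (scons y (scons x e) i)). exact Hphy.
  apply functional_extensionality. intros [|[|i]]; reflexivity.
Qed.
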